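(* For every disjunctive finitely recursive program $P$: if some module sequence for $P$ is consistent, then $P$ is consistent.
   Context: A disjunctive program is a set of rules $A_1\vee\dots\vee A_m\leftarrow L_1,\dots,L_n$ ($m>0$, $n\ge0$), $A_j$ atoms, $L_i$ atoms or negated atoms $\mathtt{not}\,A$, possibly with function symbols; $head(r)=\{A_1,\dots,A_m\}$. $\mathsf{Ground}(P)$ is its ground instantiation. For a set $M$ of ground atoms, $P^M$ is obtained from $\mathsf{Ground}(P)$ by deleting rules having some $\mathtt{not}\,B$ in the body with $B\in M$ and deleting negative literals from the remaining rules; $M$ is a stable model iff it is a minimal Herbrand model of $P^M$. A program is consistent iff it has a stable model. The dependency graph has ground atoms as vertices and an edge $A\to B$ whenever some $r\in\mathsf{Ground}(P)$ has $A\in head(r)$ and $B$ occurring in $r$ (body, positively or negated, or head); $A$ depends on $B$ if there is a directed path from $A$ to $B$ (every atom depends on itself). $P$ is finitely recursive iff each ground atom depends on finitely many ground atoms. With $GH$ the set of ground head atoms of $\mathsf{Ground}(P)$ and an enumeration $p_1,p_2,\dots$ of $GH$, the induced module sequence is $P_1=\{r\in\mathsf{Ground}(P)\mid p_1$ depends on some atom of $head(r)\}$, $P_{i+1}=P_i\cup\{r\in\mathsf{Ground}(P)\mid p_{i+1}$ depends on some atom of $head(r)\}$. A module sequence is consistent if every $P_i$ is consistent. *)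

(* Defs.v *)
From Stdlib Require Import List Relations.
Import ListNotations.
Set Implicit Arguments.

Section Syntax.
Variables (F Pr : Type).

(* First-order terms over function symbols F; variables indexed by nat.
   Constants are function symbols applied to no arguments. *)
Inductive term : Type :=
| Var : nat -> term
| Fn : F -> list term -> term.

Fixpoint subst (s : nat -> term) (t : term) : term :=
  match t with
  | Var v => s v
  | Fn f ts => Fn f (map (subst s) ts)
  end.

Fixpoint ground_term (t : term) : Prop :=
  match t with
  | Var _ => False
  | Fn _ ts => (fix go (l : list term) : Prop :=
                  match l with nil => True | u :: l' => ground_term u /\ go l' end) ts
  end.

Record atom : Type := Atom { pred : Pr; args : list term }.

Definition subst_atom (s : nat -> term) (a : atom) : atom :=
  Atom (pred a) (map (subst s) (args a)).

(* A rule  A_1 v ... v A_m <- B_1,...,B_k, not C_1, ..., not C_l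
   (the body literals split into positive and negated atoms). *)
Record rule : Type := Rule { head : list atom; pos : list atom; neg : list atom }.

Definition subst_rule (s : nat -> term) (r : rule) : rule :=
  Rule (map (subst_atom s) (head r)) (map (subst_atom s) (pos r))
       (map (subst_atom s) (neg r)).

Definition program := list rule.
Definition well_formed (P : program) : Prop :=
  forall r, In r P -> head r <> nil.

Definition Ground (P : program) (g : rule) : Prop :=
  exists r s, In r P /\ (forall v, ground_term (s v)) /\ g = subst_rule s r.

Definition reduct (G : rule -> Prop) (M : atom -> Prop) (r : rule) : Prop :=
  exists g, G g /\ (forall B, In B (neg g) -> ~ M B) /\
            r = Rule (head g) (pos g) nil.

Definition model (G : rule -> Prop) (M : atom -> Prop) : Prop :=
  forall r, G r -> (forall B, In B (pos r) -> M B) ->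
            (forall B, In B (neg r) -> ~ M B) ->
            exists A, In A (head r) /\ M A.

Definition minimal_model (G : rule -> Prop) (M : atom -> Prop) : Prop :=
  model G M /\
  forall M' : atom -> Prop, model G M' -> (forall A, M' A -> M A) ->
                            (forall A, M A -> M' A).

Definition stable_model_ground (G : rule -> Prop) (M : atom -> Prop) : Prop :=
  minimal_model (reduct G M) M.

Definition consistent_ground (G : rule -> Prop) : Prop :=
  exists M, stable_model_ground G M.

Definition stable_model (P : program) (M : atom -> Prop) : Prop :=
  stable_model_ground (Ground P) M.

Definition consistent (P : program) : Prop := exists M, stable_model P M.

Definition occurs_in (B : atom) (r : rule) : Prop :=
  In B (head r) \/ In B (pos r) \/ In B (neg r).

Definition dep_edge (P : program) (A B : atom) : Prop :=
  exists r, Ground P r /\ In A (head r) /\ occurs_in B r.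

Definition depends (P : program) : atom -> atom -> Prop :=
  clos_refl_trans atom (dep_edge P).

Definition ground_atom (a : atom) : Prop := Forall ground_term (args a).

Definition finitely_recursive (P : program) : Prop :=
  forall A, ground_atom A ->
    exists l : list atom, forall B, depends P A B -> In B l.

Definition GH (P : program) (A : atom) : Prop :=
  exists r, Ground P r /\ In A (head r).

(* p : nat -> atom enumerates GH (p 0 = p_1, p 1 = p_2, ...) *)
Definition enumerates_GH (P : program) (p : nat -> atom) : Prop :=
  (forall i, GH P (p i)) /\ (forall A, GH P A -> exists i, p i = A).

(* Module P p i is P_{i+1} of the induced module sequence *)
Definition module (P : program) (p : nat -> atom) (i : nat) (r : rule) : Prop :=
  Ground P r /\ exists j, j <= i /\ exists A, In A (head r) /\ depends P (p j) A.

Definition consistent_module_sequence (P : program) (p : nat -> atom) : Prop :=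
  forall i, consistent_ground (module P p i).

End Syntax.

(* Main.v *)
Require Import Defs.
From Stdlib Require Import List Relations.
From Stdlib Require Import Classical IndefiniteDescription FunctionalExtensionality PropExtensionality Lia.
Import ListNotations.
Import Defs.

Fixpoint subst_ground {F : Type} (s : nat -> term F) (Hs : forall v, ground_term (s v))
  (t : term F) {struct t} : ground_term (subst s t) :=
  match t as t0 return ground_term (subst s t0) with
  | Var _ v => Hs v
  | Fn f ts =>
      (fix go (l : list (term F)) :
         (fix go' (l : list (term F)) : Prop :=
            match l with nil => True | u :: l' => ground_term u /\ go' l' end) (map (subst s) l) :=
         match l with
         | nil => I
         | u :: l' => conj (subst_ground s Hs u) (go l')
         end) ts
  end.

Lemma ground_head_atom {F Pr : Type} (P : program F Pr) g A :
  Ground P g -> In A (head g) -> ground_atom A.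
Proof.
  intros [r [s [_ [Hs ->]]]] HA. simpl in HA.
  apply in_map_iff in HA as [a [<- _]].
  unfold ground_atom, subst_atom; simpl.
  apply Forall_forall. intros t Ht. apply in_map_iff in Ht as [u [<- _]].
  apply subst_ground; exact Hs.
Qed.

Section Proof.
Variables (F Pr : Type) (P : program F Pr) (p : nat -> atom F Pr).
Hypothesis WF : well_formed P.
Hypothesis FR : finitely_recursive P.
Hypothesis EN : enumerates_GH P p.
Hypothesis CS : consistent_module_sequence P p.

Notation atm := (atom F Pr).
Notation set := (atm -> Prop).

Definition D (i : nat) (A : atm) : Prop := exists j, j <= i /\ depends P (p j) A.
Definition restr (i : nat) (M : set) : set := fun A => M A /\ D i A.
Definition stab (i : nat) (M : set) := stable_model_ground (module P p i) M.
Definition agree (E : set) (M N : set) := forall A, E A -> (M A <-> N A).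

Lemma D_mono i k A : i <= k -> D i A -> D k A.
Proof. intros H [j [Hj Hd]]. exists j; split; [lia|exact Hd]. Qed.

Lemma module_mono i k g : i <= k -> module P p i g -> module P p k g.
Proof. intros H [Hg [j [Hj Hd]]]. split; [exact Hg|]. exists j; split; [lia|exact Hd]. Qed.

Lemma module_atoms i g B : module P p i g -> occurs_in B g -> D i B.
Proof.
  intros [Hg [j [Hj [A [HA Hd]]]]] Ho. exists j; split; [exact Hj|].
  eapply rt_trans; [exact Hd|]. apply rt_step. exists g; auto.
Qed.

Lemma module_intro i g A : Ground P g -> In A (head g) -> D i A -> module P p i g.
Proof.
  intros Hg HA [j [Hj Hd]]. split; [exact Hg|]. exists j; split; [exact Hj|]. exists A; auto.
Qed.

Lemma stab_sub k M : stab k M -> forall A, M A -> D k A.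
Proof.
  intros [Hmod Hmin].
  assert (H : forall A, M A -> restr k M A).
  { apply Hmin; [|intros A [H _]; exact H].
    intros r [g [Hg [Hneg ->]]] Hpos _; simpl in *.
    destruct (Hmod (Rule (head g) (pos g) nil)) as [A [HA HMA]].
    - exists g; auto.
    - intros B HB. apply Hpos; exact HB.
    - simpl; tauto.
    - exists A; split; [exact HA|]. split; [exact HMA|].
      eapply module_atoms; [exact Hg|]. left; exact HA. }
  intros A HA. apply H; exact HA.
Qed.

Lemma split_lemma i k M : i <= k -> stab k M -> stab i (restr i M).
Proof.
  intros Hik [Hmod Hmin]. split.
  - intros r [g [Hg [Hneg ->]]] Hpos _; simpl in *.
    destruct (Hmod (Rule (head g) (pos g) nil)) as [A [HA HMA]].
    + exists g; split; [eapply module_mono; eauto|]. split; [|reflexivity].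
      intros B HB HMB. apply (Hneg B HB). split; [exact HMB|].
      eapply module_atoms; [exact Hg|]. right; right; exact HB.
    + intros B HB. apply Hpos; exact HB.
    + simpl; tauto.
    + exists A; split; [exact HA|]. split; [exact HMA|].
      eapply module_atoms; [exact Hg|]. left; exact HA.
  - intros N' HN' Hsub A [HMA HDA].
    set (M'' := fun X => N' X \/ (M X /\ ~ D i X)).
    assert (HM : forall A, M A -> M'' A).
    { apply Hmin.
      - intros r [g [Hg [Hneg ->]]] Hpos _; simpl in *.
        destruct (classic (exists A, In A (head g) /\ D i A)) as [[A0 [HA0 HD0]] | Hno].
        + assert (Hgi : module P p i g) by (eapply module_intro; [apply Hg|exact HA0|exact HD0]).
          destruct (HN' (Rule (head g) (pos g) nil)) as [A1 [HA1 HNA]].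
          * exists g; split; [exact Hgi|]. split; [|reflexivity].
            intros B HB [HMB _]. exact (Hneg B HB HMB).
          * simpl. intros B HB. destruct (Hpos B HB) as [H|[_ H]]; [exact H|].
            exfalso; apply H. eapply module_atoms; [exact Hgi|]. right; left; exact HB.
          * simpl; tauto.
          * exists A1; split; [exact HA1|]. left; exact HNA.
        + destruct (Hmod (Rule (head g) (pos g) nil)) as [A2 [HA2 HMA']].
          * exists g; auto.
          * simpl. intros B HB. destruct (Hpos B HB) as [H|[H _]]; [|exact H].
            apply Hsub in H. destruct H; assumption.
          * simpl; tauto.
          * exists A2; split; [exact HA2|]. right; split; [exact HMA'|].
            intro HD. apply Hno. exists A2; auto.
      - intros B [H|[H _]]; [|exact H]. apply Hsub in H. destruct H; assumption. }
    destruct (HM A HMA) as [H|[_ H]]; [exact H|]. contradiction.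
Qed.

Lemma stab_ext i M N : stab i M -> (forall A, M A <-> N A) -> stab i N.
Proof.
  intros H Heq. assert (M = N) as <-; [|exact H].
  apply functional_extensionality; intro A. apply propositional_extensionality; apply Heq.
Qed.

Lemma p_ground j : ground_atom (p j).
Proof.
  destruct EN as [HG _]. destruct (HG j) as [g [Hg HA]].
  eapply ground_head_atom; eauto.
Qed.

Lemma D_fin i : exists L, forall A, D i A -> In A L.
Proof.
  induction i as [|i [L IH]].
  - destruct (FR (p 0) (p_ground 0)) as [L HL]. exists L.
    intros A [j [Hj Hd]]. assert (j = 0) by lia; subst. apply HL; exact Hd.
  - destruct (FR (p (S i)) (p_ground (S i))) as [L' HL']. exists (L ++ L').
    intros A [j [Hj Hd]]. apply in_or_app.
    destruct (PeanoNat.Nat.eq_dec j (S i)) as [->|Hne].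
    + right; apply HL'; exact Hd.
    + left; apply IH; exists j; split; [lia|exact Hd].
Qed.

Fixpoint pw (l : list atm) : list (list atm) :=
  match l with
  | [] => [[]]
  | a :: t => pw t ++ map (cons a) (pw t)
  end.

Lemma pw_sub l l' : In l' (pw l) -> forall A, In A l' -> In A l.
Proof.
  revert l'; induction l as [|a t IH]; simpl; intros l' Hl' A HA.
  - destruct Hl' as [<-|[]]; destruct HA.
  - apply in_app_or in Hl' as [H|H].
    + right; eapply IH; eauto.
    + apply in_map_iff in H as [l0 [<- H0]]. destruct HA as [->|HA]; [left; reflexivity|].
      right; eapply IH; eauto.
Qed.

Lemma pw_cover (S : set) l : exists l', In l' (pw l) /\ forall A, In A l -> (S A <-> In A l').
Proof.
  induction l as [|a t [l' [Hin Hl']]].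
  - exists []; simpl; split; [left; reflexivity|]. intros A [].
  - destruct (classic (S a)) as [Ha|Ha].
    + exists (a :: l'); split.
      * simpl; apply in_or_app; right; apply in_map; exact Hin.
      * intros A [<-|HA]; simpl.
        -- tauto.
        -- rewrite (Hl' A HA). split; [auto|]. intros [<-|H]; [apply Hl'; auto|exact H].
    + exists l'; split.
      * simpl; apply in_or_app; left; exact Hin.
      * intros A [<-|HA].
        -- split; [intro; contradiction|]. intro H. exfalso.
           destruct (classic (In a t)) as [Ht|Ht].
           ++ apply Ha; apply Hl'; auto.
           ++ apply Ht; eapply pw_sub; eauto.
        -- apply Hl'; exact HA.
Qed.

Lemma bound i (Q : list atm -> nat -> Prop) (ls : list (list atm)) :
  (forall l, In l ls -> exists k, i <= k /\ Q l k) ->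
  exists K, i <= K /\ forall l, In l ls -> exists k, i <= k /\ k <= K /\ Q l k.
Proof.
  induction ls as [|l0 ls IH]; intros H.
  - exists i; split; [lia|]. intros l [].
  - destruct IH as [K [HK HKl]]. { intros l Hl; apply H; right; exact Hl. }
    destruct (H l0 (or_introl eq_refl)) as [k0 [Hk0 Q0]].
    exists (max K k0); split; [lia|]. intros l [<-|Hl].
    + exists k0; repeat split; [lia|lia|exact Q0].
    + destruct (HKl l Hl) as [k [H1 [H2 H3]]]. exists k; repeat split; [lia|lia|exact H3].
Qed.

Lemma pigeon i (R : set -> Prop) :
  (forall M k', i <= k' -> R M -> R (restr k' M)) ->
  (forall k, i <= k -> exists M, stab k M /\ R M) ->
  exists N, (forall A, N A -> D i A) /\
    forall k, i <= k -> exists M, stab k M /\ R M /\ agree (D i) M N.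
Proof.
  intros HR Hex. apply NNPP; intro Hno.
  destruct (D_fin i) as [L HL].
  set (cand := fun l A => In A l /\ D i A).
  assert (Hfail : forall l, In l (pw L) -> exists k, i <= k /\
            ~ (exists M, stab k M /\ R M /\ agree (D i) M (cand l))).
  { intros l _. apply NNPP; intro H2. apply Hno. exists (cand l). split.
    - intros A [_ H]; exact H.
    - intros k Hk. apply NNPP; intro H3. apply H2. exists k; split; assumption. }
  destruct (bound i _ _ Hfail) as [K [HK HKl]].
  destruct (Hex K HK) as [M [HM HRM]].
  destruct (pw_cover M L) as [l' [Hl' HMl']].
  destruct (HKl l' Hl') as [k [H1 [H2 H3]]].
  apply H3. exists (restr k M). split; [eapply split_lemma; eauto|]. split; [apply HR; auto|].
  intros A HDA. unfold restr, cand. rewrite <- (HMl' A (HL A HDA)).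
  split; [intros [H _]; split; auto|intros [H _]; split; auto].
  eapply D_mono; [|exact HDA]. exact H1.
Qed.

Definition ext (i : nat) (N : set) :=
  (forall A, N A -> D i A) /\ forall k, i <= k -> exists M, stab k M /\ agree (D i) M N.

Lemma ext_base : exists N, ext 0 N.
Proof.
  destruct (pigeon 0 (fun _ => True)) as [N [HN1 HN2]].
  - auto.
  - intros k _. destruct (CS k) as [M HM]. exists M; split; auto.
  - exists N; split; [exact HN1|]. intros k Hk. destruct (HN2 k Hk) as [M [H1 [_ H3]]]. eauto.
Qed.

Lemma ext_step i N : ext i N -> exists N', ext (S i) N' /\ agree (D i) N' N.
Proof.
  intros [HN1 HN2].
  destruct (pigeon (S i) (fun M => agree (D i) M N)) as [N' [H1 H2]].
  - intros M k' Hk' HM A HA. unfold restr. rewrite <- (HM A HA).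
    split; [intros [H _]; exact H|intro H; split; [exact H|eapply D_mono; [|exact HA]; lia]].
  - intros k Hk. apply HN2; lia.
  - exists N'; split.
    + split; [exact H1|]. intros k Hk. destruct (H2 k Hk) as [M [Ha [_ Hc]]]. eauto.
    + destruct (H2 (S i) (le_n _)) as [M [Ha [Hb Hc]]].
      intros A HA. rewrite <- (Hc A (D_mono i (S i) A ltac:(lia) HA)). apply Hb; exact HA.
Qed.

Definition nxt (m : nat) (x : {N | ext m N}) : {N' | ext (S m) N' /\ agree (D m) N' (proj1_sig x)} :=
  constructive_indefinite_description _ (ext_step m (proj1_sig x) (proj2_sig x)).

Fixpoint sq (n : nat) : {N | ext n N} :=
  match n with
  | 0 => constructive_indefinite_description _ ext_base
  | S m => exist _ (proj1_sig (nxt m (sq m))) (proj1 (proj2_sig (nxt m (sq m))))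
  end.

Definition Ns n := proj1_sig (sq n).

Lemma Ns_ext n : ext n (Ns n).
Proof. exact (proj2_sig (sq n)). Qed.

Lemma Ns_step m : agree (D m) (Ns (S m)) (Ns m).
Proof. exact (proj2 (proj2_sig (nxt m (sq m)))). Qed.

Lemma Ns_agree i k : i <= k -> agree (D i) (Ns k) (Ns i).
Proof.
  induction 1 as [|k Hk IH]; [intros A _; tauto|].
  intros A HA. rewrite <- (IH A HA). apply Ns_step. eapply D_mono; [exact Hk|exact HA].
Qed.

Definition Minf : set := fun A => exists i, Ns i A.

Lemma Minf_agree i : agree (D i) Minf (Ns i).
Proof.
  intros A HA. split; [|intro H; exists i; exact H].
  intros [j Hj]. destruct (Compare_dec.le_ge_dec i j) as [H|H].
  - apply (Ns_agree i j H A HA); exact Hj.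
  - apply (Ns_agree j i H A); [apply (proj1 (Ns_ext j)); exact Hj|exact Hj].
Qed.

Lemma Ns_stab i : stab i (Ns i).
Proof.
  destruct (Ns_ext i) as [H1 H2]. destruct (H2 i (le_n _)) as [M [HM HA]].
  apply (stab_ext i M); [exact HM|].
  intro A. split; intro H.
  - apply (HA A (stab_sub i M HM A H)); exact H.
  - apply (HA A (H1 A H)); exact H.
Qed.

Lemma ground_in_module g : Ground P g -> exists i, module P p i g.
Proof.
  intros Hg. pose proof Hg as [r [s [Hr [_ ->]]]].
  destruct (head r) as [|A0 hs] eqn:Eh; [exfalso; exact (WF r Hr Eh)|].
  set (A := subst_atom s A0).
  assert (HA : In A (head (subst_rule s r))) by (simpl; rewrite Eh; left; reflexivity).
  destruct EN as [_ Hon]. destruct (Hon A) as [i Hi]. { exists (subst_rule s r); auto. }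
  exists i. apply (module_intro i _ A Hg HA). exists i; split; [lia|]. rewrite Hi. apply rt_refl.
Qed.

Lemma Minf_stable : stable_model P Minf.
Proof.
  split.
  - intros r [g [Hg [Hneg ->]]] Hpos _; simpl in *.
    destruct (ground_in_module g Hg) as [j Hj].
    destruct (Ns_stab j) as [Hmod _].
    destruct (Hmod (Rule (head g) (pos g) nil)) as [A [HA HNA]].
    + exists g; split; [exact Hj|]. split; [|reflexivity].
      intros B HB HNB. apply (Hneg B HB). exists j; exact HNB.
    + simpl. intros B HB. apply (Minf_agree j B).
      * eapply module_atoms; [exact Hj|]. right; left; exact HB.
      * apply Hpos; exact HB.
    + simpl; tauto.
    + exists A; split; [exact HA|]. exists j; exact HNA.
  - intros M' HM' Hsub A [i HiA].
    destruct (Ns_stab i) as [_ Hmin].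
    assert (H : forall A, Ns i A -> restr i M' A).
    { apply Hmin.
      - intros r [g [Hg [Hneg ->]]] Hpos _; simpl in *.
        destruct (HM' (Rule (head g) (pos g) nil)) as [A0 [HA0 HM0]].
        + exists g; split; [destruct Hg; assumption|]. split; [|reflexivity].
          intros B HB HMB. apply (Hneg B HB). apply (Minf_agree i B); [|exact HMB].
          eapply module_atoms; [exact Hg|]. right; right; exact HB.
        + intros B HB. apply Hpos; exact HB.
        + simpl; tauto.
        + exists A0; split; [exact HA0|]. split; [exact HM0|].
          eapply module_atoms; [exact Hg|]. left; exact HA0.
      - intros B [HB HDB]. apply (Minf_agree i B HDB). apply Hsub; exact HB. }
    apply H; exact HiA.
Qed.

End Proof.

Theorem theorem4p1 (F Pr : Type) (P : program F Pr) :
  well_formed P ->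
  finitely_recursive P ->
  (exists p : nat -> atom F Pr,
      enumerates_GH P p /\ consistent_module_sequence P p) ->
  consistent P.
Proof.
  intros WF FR [p [EN CS]]. exists (Minf F Pr P p FR EN CS). apply Minf_stable; assumption.
Qed.
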